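(* Let $\tau>0$, $\lambda=1-\tau^2$, and let $\gamma:I\subset\mathbb{R}\to H$, $\gamma(s)=(e^{iy(s)}\cos x(s),\sin x(s))$, be the profile curve of a rotationally invariant surface $\Phi(s,t)=(e^{iy(s)}\cos x(s), e^{it}\sin x(s))$ in $\mathbb{S}^3_\tau$ with Gauss curvature $K$. Then, after a suitable reparametrization of $\gamma$, there exists a function $\alpha:I\to\mathbb{R}$ such that $x,y,\alpha$ satisfy \[ \begin{aligned} x'&=\cos\alpha,\\ y'&=\frac{1}{\tau}\frac{\sqrt{1-\lambda\sin^2x}}{\cos x}\sin\alpha,\\ \alpha'&=\frac{\tan x}{\sin\alpha}\left[\frac{1-\lambda\sin^2x}{1-2\lambda\sin^2x}K-\cos^2\alpha\left(\frac{1-\lambda}{1-\lambda\sin^2x}+\frac{4\lambda\cos^2x}{1-2\lambda\sin^2x}\right)\right]. \end{aligned} \] Moreover, if $K$ is constant and $(x(s),y(s),\alpha(s))$ is a solution of this system, then the quantity \[ \mathcal{E}=\frac{(1-2\lambda\sin^2x)^2}{1-\lambda\sin^2x}\cos^2x\cos^2\alpha+K(1-\lambda\sin^2x)\sin^2x \] is constant.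
   Context: The Berger sphere $\mathbb{S}^3_\tau$ ($\tau>0$) is the set $\{(z,w)\in\mathbb{C}^2: |z|^2+|w|^2=1\}$ with the metric $g_\tau(X,Y)=\langle X,Y\rangle-(1-\tau^2)\langle X,V\rangle\langle Y,V\rangle$, where $\langle\cdot,\cdot\rangle$ is the metric induced from the Euclidean metric of $\mathbb{C}^2=\mathbb{R}^4$ and $V_{(z,w)}=(iz,iw)$. A surface is rotationally invariant if it is invariant under the group $\mathrm{Rot}=\{(z,w)\mapsto(z,e^{it}w): t\in\mathbb{R}\}$. The orbit space $\mathbb{S}^3_\tau/\mathrm{Rot}$ is identified with the closed hemisphere $H=\{(z,a)\in\mathbb{C}\times\mathbb{R}: |z|^2+a^2=1,\ a\ge0\}\subset\mathbb{S}^2(1)$, and a rotationally invariant surface is the $\mathrm{Rot}$-orbit of a profile curve $\gamma(s)=(e^{iy(s)}\cos x(s),\sin x(s))$ with $\sin x(s)\ge 0$, parametrized by $\Phi(s,t)=(e^{iy(s)}\cos x(s),e^{it}\sin x(s))$. *)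

(* Defs.v *)
From Stdlib Require Import Reals.
From Coquelicot Require Import Coquelicot.
Open Scope R_scope.

(** Points / vectors of R^4 = C^2, with (z,w) = (z1 + i z2, w1 + i w2). *)
Definition R4 : Type := (R * R * R * R)%type.

Definition dot4 (p q : R4) : R :=
  let '(a1, a2, a3, a4) := p in let '(b1, b2, b3, b4) := q in
  a1 * b1 + a2 * b2 + a3 * b3 + a4 * b4.

(** The vector field V_(z,w) = (iz, iw). *)
Definition Vfield (p : R4) : R4 :=
  let '(z1, z2, w1, w2) := p in (- z2, z1, - w2, w1).

Definition berger_metric (tau : R) (p X Y : R4) : R :=
  dot4 X Y - (1 - tau ^ 2) * dot4 X (Vfield p) * dot4 Y (Vfield p).

Definition lam (tau : R) : R := 1 - tau ^ 2.

Definition c1 (p : R4) : R := let '(a, _, _, _) := p in a.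
Definition c2 (p : R4) : R := let '(_, a, _, _) := p in a.
Definition c3 (p : R4) : R := let '(_, _, a, _) := p in a.
Definition c4 (p : R4) : R := let '(_, _, _, a) := p in a.

Definition Ds (f : R -> R -> R4) (s t : R) : R4 :=
  (Derive (fun u => c1 (f u t)) s, Derive (fun u => c2 (f u t)) s,
   Derive (fun u => c3 (f u t)) s, Derive (fun u => c4 (f u t)) s).
Definition Dt (f : R -> R -> R4) (s t : R) : R4 :=
  (Derive (fun v => c1 (f s v)) t, Derive (fun v => c2 (f s v)) t,
   Derive (fun v => c3 (f s v)) t, Derive (fun v => c4 (f s v)) t).

Definition fundE (tau : R) (f : R -> R -> R4) (s t : R) : R :=
  berger_metric tau (f s t) (Ds f s t) (Ds f s t).
Definition fundF (tau : R) (f : R -> R -> R4) (s t : R) : R :=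
  berger_metric tau (f s t) (Ds f s t) (Dt f s t).
Definition fundG (tau : R) (f : R -> R -> R4) (s t : R) : R :=
  berger_metric tau (f s t) (Dt f s t) (Dt f s t).

Definition pds (h : R -> R -> R) (s t : R) : R := Derive (fun u => h u t) s.
Definition pdt (h : R -> R -> R) (s t : R) : R := Derive (fun v => h s v) t.

Definition det3 (a11 a12 a13 a21 a22 a23 a31 a32 a33 : R) : R :=
  a11 * (a22 * a33 - a23 * a32) - a12 * (a21 * a33 - a23 * a31)
  + a13 * (a21 * a32 - a22 * a31).

(** Gauss (intrinsic) curvature of the metric E ds^2 + 2F ds dt + G dt^2
    induced on the surface f, given by Brioschi's formula. *)
Definition gauss_curvature (tau : R) (f : R -> R -> R4) (s t : R) : R :=
  let E := fundE tau f in let F := fundF tau f in let G := fundG tau f in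
  let Es := pds E s t in let Et := pdt E s t in
  let Fs := pds F s t in let Ft := pdt F s t in
  let Gs := pds G s t in let Gt := pdt G s t in
  let Ett := pdt (pdt E) s t in let Fst := pds (pdt F) s t in
  let Gss := pds (pds G) s t in
  (det3 (- Ett / 2 + Fst - Gss / 2) (Es / 2) (Fs - Et / 2)
        (Ft - Gs / 2) (E s t) (F s t)
        (Gt / 2) (F s t) (G s t)
   - det3 0 (Et / 2) (Gs / 2)
          (Et / 2) (E s t) (F s t)
          (Gs / 2) (F s t) (G s t))
  / (E s t * G s t - F s t ^ 2) ^ 2.

(** The rotationally invariant surface generated by the profile curve
    gamma(s) = (e^{i y(s)} cos x(s), sin x(s)):
    Phi(s,t) = (e^{i y(s)} cos x(s), e^{i t} sin x(s)). *)
Definition Phi (x y : R -> R) (s t : R) : R4 :=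
  (cos (y s) * cos (x s), sin (y s) * cos (x s), cos t * sin (x s), sin t * sin (x s)).

Definition inI (a b : Rbar) (s : R) : Prop := Rbar_lt a s /\ Rbar_lt s b.

Definition smooth_on (a b : Rbar) (f : R -> R) : Prop :=
  forall (n : nat) (s : R), inI a b s -> ex_derive_n f n s.

Definition rot_system (tau : R) (x y al : R -> R) (Kv : R) (u : R) : Prop :=
  let l := lam tau in
  let S2 := sin (x u) ^ 2 in
  Derive x u = cos (al u) /\
  Derive y u = / tau * (sqrt (1 - l * S2) / cos (x u)) * sin (al u) /\
  Derive al u = tan (x u) / sin (al u) *
    ((1 - l * S2) / (1 - 2 * l * S2) * Kv
     - cos (al u) ^ 2 * ((1 - l) / (1 - l * S2)
                         + 4 * l * cos (x u) ^ 2 / (1 - 2 * l * S2))).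

Definition energy (tau : R) (Kv : R) (x al : R -> R) (u : R) : R :=
  let l := lam tau in
  let S2 := sin (x u) ^ 2 in
  (1 - 2 * l * S2) ^ 2 / (1 - l * S2) * cos (x u) ^ 2 * cos (al u) ^ 2
  + Kv * (1 - l * S2) * S2.

(* Main.v *)
Require Import Defs.
From Stdlib Require Import Reals Lra Psatz ClassicalEpsilon Classical.
From Coquelicot Require Import Coquelicot.
Open Scope R_scope.

Lemma param (s c : R) : s^2 + c^2 = 1 -> c <> -1 ->
  exists q, s = 2*q/(1+q^2) /\ c = (1-q^2)/(1+q^2).
Proof.
intros H Hc. assert (H0 : 1 + c <> 0) by (intro; apply Hc; lra).
assert (E : (1+c)^2 + s^2 = 2*(1+c)) by nra.
set (q := s/(1+c)).
assert (Hq2 : 1 + q^2 = 2/(1+c)).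
{ unfold q. replace (1 + (s/(1+c))^2) with (((1+c)^2+s^2)/(1+c)^2) by (field; auto).
  rewrite E. field; auto. }
exists q. split.
- rewrite Hq2. unfold q. field. auto.
- replace (1-q^2) with (2 - (1+q^2)) by ring. rewrite Hq2. field. auto.
Qed.

Lemma inI_locally a b s : inI a b s -> locally s (inI a b).
Proof.
intros H. apply (open_and _ _ (open_Rbar_gt a) (open_Rbar_lt b)). exact H.
Qed.

Lemma inI_between a b u v w : inI a b u -> inI a b v -> Rmin u v <= w <= Rmax u v -> inI a b w.
Proof.
intros [Hu1 Hu2] [Hv1 Hv2] [H1 H2]. split.
- destruct a as [a| |]; simpl in *; auto.
  apply Rlt_le_trans with (Rmin u v); auto. apply Rmin_case; auto.
- destruct b as [b| |]; simpl in *; auto.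
  apply Rle_lt_trans with (Rmax u v); auto. apply Rmax_case; auto.
Qed.

Lemma one_m_lS_pos tau z : 0 < tau -> cos z <> 0 -> 0 < 1 - lam tau * sin z ^ 2.
Proof.
intros Ht Hc. unfold lam. pose proof (sin2_cos2 z). unfold Rsqr in H.
assert (0 < cos z ^ 2) by (apply pow2_gt_0 ; auto).
assert (0 <= sin z ^ 2) by nra. nra.
Qed.


Lemma energy_deriv tau K x y alpha u : 0 < tau ->
  ex_derive x u -> ex_derive alpha u -> cos (x u) <> 0 -> sin (alpha u) <> 0 ->
  1 - 2 * lam tau * sin (x u) ^ 2 <> 0 -> rot_system tau x y alpha K u ->
  is_derive (energy tau K x alpha) u 0.
Proof.
intros Ht Hx Ha Hc Hs H2 [D1 [_ D3]].
pose proof (one_m_lS_pos tau (x u) Ht Hc) as H1.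
unfold energy. auto_derive.
{ repeat split; auto. lra. }
change (fun x0 : R => x x0) with x. change (fun x0 : R => alpha x0) with alpha.
rewrite D1, D3. unfold tan. set (l := lam tau) in *.
pose proof (sin2_cos2 (x u)) as Hsc. unfold Rsqr in Hsc.
revert Hc H1 H2 Hs Hsc. generalize (sin (x u)) (cos (x u)) (sin (alpha u)) (cos (alpha u)).
intros s c sa ca Hc H1 H2 Hs Hsc.
field_simplify_eq; [| repeat split; auto; lra].
assert (Hsc' : s^2 + c^2 = 1) by lra.
destruct (Req_dec c (-1)) as [Hm|Hm].
- assert (s = 0) by nra. subst. ring.
- destruct (param s c Hsc' Hm) as [q [-> ->]].
  assert (1 + q^2 <> 0) by (intro; nra).
  field. auto.
Qed.

Lemma part2 (tau : R) (Htau : 0 < tau) :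
  (forall (K : R) (c d : Rbar) (x y alpha : R -> R),
     Rbar_lt c d ->
     (forall u, inI c d u ->
        ex_derive x u /\ ex_derive y u /\ ex_derive alpha u /\
        cos (x u) <> 0 /\ sin (alpha u) <> 0 /\
        1 - 2 * lam tau * sin (x u) ^ 2 <> 0 /\
        rot_system tau x y alpha K u) ->
     forall u v, inI c d u -> inI c d v ->
       energy tau K x alpha u = energy tau K x alpha v).
Proof.
intros K c d x y alpha _ H u v Hu Hv.
assert (HD : forall w, inI c d w -> is_derive (energy tau K x alpha) w 0).
{ intros w Hw. destruct (H w Hw) as (h1 & h2 & h3 & h4 & h5 & h6 & h7).
  eapply energy_deriv; eauto. }
destruct (MVT_gen (energy tau K x alpha) u v (fun _ => 0)) as [w [_ Hw]].
- intros w Hw. apply HD. apply (inI_between c d u v w Hu Hv). lra.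
- intros w Hw. apply continuity_pt_filterlim. apply (ex_derive_continuous (energy tau K x alpha)).
  eexists. apply HD. apply (inI_between c d u v w Hu Hv). exact Hw.
- lra.
Qed.


Definition Dn (a b : Rbar) (n : nat) (f : R -> R) : Prop :=
  forall k, (k <= n)%nat -> forall s, inI a b s -> ex_derive_n f k s.

Lemma ex_derive_n_SS f k s :
  ex_derive_n f (S (S k)) s <-> ex_derive_n (Derive f) (S k) s.
Proof.
change (ex_derive (Derive_n f (S k)) s <-> ex_derive (Derive_n (Derive f) k) s).
assert (E : forall t, Derive_n (Derive f) k t = Derive_n f (S k) t).
{ intros t. rewrite (Derive_n_comp f k 1). rewrite Nat.add_1_r. reflexivity. }
split; intros H.
- apply (ex_derive_ext (Derive_n f (S k))). intros; symmetry; apply E. exact H.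
- apply (ex_derive_ext (Derive_n (Derive f) k)). intros; apply E. exact H.
Qed.

Lemma Dn_S a b n f :
  Dn a b (S n) f <-> (forall s, inI a b s -> ex_derive f s) /\ Dn a b n (Derive f).
Proof.
split.
- intros H. split.
  + intros s Hs. exact (H 1%nat ltac:(lia) s Hs).
  + intros k Hk s Hs. destruct k as [|k]. exact I.
    apply (proj1 (ex_derive_n_SS f k s)). apply (H (S (S k)) ltac:(lia) s Hs).
- intros [H1 H2] k Hk s Hs. destruct k as [|k]. exact I.
  destruct k as [|k]. exact (H1 s Hs).
  apply (proj2 (ex_derive_n_SS f k s)). apply (H2 (S k) ltac:(lia) s Hs).
Qed.

Lemma Dn_le a b n f : Dn a b (S n) f -> Dn a b n f.
Proof. intros H k Hk s Hs. apply (H k ltac:(lia) s Hs). Qed.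

Lemma Dn_le' a b n m f : (m <= n)%nat -> Dn a b n f -> Dn a b m f.
Proof. intros Hm H k Hk s Hs. apply (H k ltac:(lia) s Hs). Qed.

Lemma Dn_loc a b n f s : Dn a b n f -> inI a b s ->
  locally s (fun y => forall k, (k <= n)%nat -> ex_derive_n f k y).
Proof.
intros H Hs. apply (filter_imp (inI a b)). intros y Hy k Hk. exact (H k Hk y Hy).
apply inI_locally; exact Hs.
Qed.

Lemma Dn_ext a b n f g : Dn a b n f -> (forall s, inI a b s -> f s = g s) -> Dn a b n g.
Proof.
intros H E k Hk s Hs. apply (ex_derive_n_ext_loc f g). 
apply (filter_imp (inI a b)). intros t Ht; apply E; exact Ht. apply inI_locally; exact Hs.
exact (H k Hk s Hs).
Qed.

Lemma Dn_const a b n c : Dn a b n (fun _ => c).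
Proof. intros k Hk s Hs. apply ex_derive_n_const. Qed.

Lemma Dn_id a b n : Dn a b n (fun x => x).
Proof. intros k Hk s Hs. apply (ex_derive_n_ext (fun x => x^1)). intros; ring. apply ex_derive_n_pow. Qed.

Lemma Dn_plus a b n f g : Dn a b n f -> Dn a b n g -> Dn a b n (fun x => f x + g x).
Proof.
intros Hf Hg k Hk s Hs. apply ex_derive_n_plus; apply (Dn_loc a b k); try exact Hs; apply (Dn_le' a b n k); assumption.
Qed.

Lemma Dn_minus a b n f g : Dn a b n f -> Dn a b n g -> Dn a b n (fun x => f x - g x).
Proof.
intros Hf Hg k Hk s Hs. apply ex_derive_n_minus; apply (Dn_loc a b k); try exact Hs; apply (Dn_le' a b n k); assumption.
Qed.

Lemma Dn_opp a b n f : Dn a b n f -> Dn a b n (fun x => - f x).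
Proof. intros Hf k Hk s Hs. apply ex_derive_n_opp. exact (Hf k Hk s Hs). Qed.

Lemma Dn_scal a b n c f : Dn a b n f -> Dn a b n (fun x => c * f x).
Proof. intros Hf k Hk s Hs. apply ex_derive_n_scal_l. exact (Hf k Hk s Hs). Qed.

Lemma Dn_ex_derive a b n f s : Dn a b (S n) f -> inI a b s -> ex_derive f s.
Proof. intros H Hs. exact (proj1 (proj1 (Dn_S a b n f) H) s Hs). Qed.

Lemma Dn_mult a b n : forall f g, Dn a b n f -> Dn a b n g -> Dn a b n (fun x => f x * g x).
Proof.
induction n as [|n IH]; intros f g Hf Hg.
- intros k Hk s Hs. assert (k = 0%nat) by lia. subst. exact I.
- apply Dn_S. pose proof Hf as Hf'. apply Dn_S in Hf as [Hf1 Hf2]. pose proof Hg as Hg'. apply Dn_S in Hg as [Hg1 Hg2].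
  split.
  + intros s Hs. apply ex_derive_mult; [apply Hf1 | apply Hg1]; exact Hs.
  + apply (Dn_ext a b n (fun x => Derive f x * g x + f x * Derive g x)).
    * apply Dn_plus; apply IH; try assumption; apply Dn_le; assumption.
    * intros s Hs. rewrite Derive_mult; [reflexivity | apply Hf1; exact Hs | apply Hg1; exact Hs].
Qed.

Lemma Dn_comp a b a' b' n : forall g f,
  (forall m, Dn a' b' m g) -> Dn a b n f -> (forall s, inI a b s -> inI a' b' (f s)) ->
  Dn a b n (fun x => g (f x)).
Proof.
induction n as [|n IH]; intros g f Hg Hf Hr.
- intros k Hk s Hs. assert (k = 0%nat) by lia. subst. exact I.
- apply Dn_S. pose proof Hf as Hf'. apply Dn_S in Hf as [Hf1 Hf2].
  assert (Hg1 : forall z, inI a' b' z -> ex_derive g z) by (intros z Hz; exact (Dn_ex_derive a' b' 0 g z (Hg 1%nat) Hz)).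
  split.
  + intros s Hs. apply ex_derive_comp; [apply Hg1; apply Hr; exact Hs | apply Hf1; exact Hs].
  + apply (Dn_ext a b n (fun x => Derive g (f x) * Derive f x)).
    * apply Dn_mult; [ | exact Hf2]. apply IH; [ | apply Dn_le; exact Hf' | exact Hr].
      intros m. exact (proj2 (proj1 (Dn_S a' b' m g) (Hg (S m)))).
    * intros s Hs. rewrite (Derive_comp g f s); [apply Rmult_comm | apply Hg1; apply Hr; exact Hs | apply Hf1; exact Hs].
Qed.

Definition smooth_all (a b : Rbar) f := forall n, Dn a b n f.

Lemma smooth_on_all a b f : smooth_on a b f <-> smooth_all a b f.
Proof.
split. intros H n k Hk s Hs. apply H; auto.
intros H n s Hs. apply (H n n); auto.
Qed.

Lemma Dn_sin_cos n : Dn m_infty p_infty n sin /\ Dn m_infty p_infty n cos.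
Proof.
induction n as [|n [IHs IHc]].
- split; intros k Hk s Hs; assert (k = 0%nat) by lia; subst; exact I.
- split; apply Dn_S; split.
  + intros; auto_derive; auto.
  + apply (Dn_ext _ _ n cos); auto. intros s _. symmetry. apply is_derive_unique.
    apply is_derive_Reals. apply derivable_pt_lim_sin.
  + intros; auto_derive; auto.
  + apply (Dn_ext _ _ n (fun x => - sin x)); auto. apply Dn_opp; auto.
    intros s _. symmetry. apply is_derive_unique.
    apply is_derive_Reals. apply derivable_pt_lim_cos.
Qed.

Lemma Dn_inv n : Dn (Finite 0) p_infty n (fun x => / x).
Proof.
induction n as [|n IH].
- intros k Hk s Hs; assert (k = 0%nat) by lia; subst; exact I.
- apply Dn_S; split.
  + intros s [Hs _]. simpl in Hs. auto_derive. lra.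
  + apply (Dn_ext _ _ n (fun x => - ((/ x) * (/ x)))).
    * apply Dn_opp. apply Dn_mult; auto.
    * intros s [Hs _]. simpl in Hs. symmetry. apply is_derive_unique. auto_derive. lra.
      field. lra.
Qed.

Lemma Dn_sqrt n : Dn (Finite 0) p_infty n sqrt.
Proof.
induction n as [|n IH].
- intros k Hk s Hs; assert (k = 0%nat) by lia; subst; exact I.
- apply Dn_S; split.
  + intros s [Hs _]. simpl in Hs. auto_derive. lra.
  + apply (Dn_ext _ _ n (fun x => / 2 * (/ (sqrt x)))).
    * apply Dn_scal. apply (Dn_comp _ _ (Finite 0) p_infty); auto. apply Dn_inv.
      intros s [Hs _]; split; simpl in *; auto. apply sqrt_lt_R0; auto.
    * intros s [Hs _]. simpl in Hs. symmetry. apply is_derive_unique. auto_derive. lra.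
      field. apply Rgt_not_eq. apply sqrt_lt_R0; auto.
Qed.

Lemma Dn_deriv a b n f : Dn a b (S n) f -> Dn a b n (Derive f).
Proof. intros H. apply Dn_S in H. tauto. Qed.


Section SA.
Variables a b : Rbar.

Lemma sa_ext f g : smooth_all a b f -> (forall s, inI a b s -> f s = g s) -> smooth_all a b g.
Proof. intros H E n. exact (Dn_ext a b n f g (H n) E). Qed.
Lemma sa_const c : smooth_all a b (fun _ => c).
Proof. intros n. apply Dn_const. Qed.
Lemma sa_id : smooth_all a b (fun x => x).
Proof. intros n. apply Dn_id. Qed.
Lemma sa_plus f g : smooth_all a b f -> smooth_all a b g -> smooth_all a b (fun x => f x + g x).
Proof. intros H1 H2 n. apply Dn_plus; auto. Qed.
Lemma sa_minus f g : smooth_all a b f -> smooth_all a b g -> smooth_all a b (fun x => f x - g x).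
Proof. intros H1 H2 n. apply Dn_minus; auto. Qed.
Lemma sa_mult f g : smooth_all a b f -> smooth_all a b g -> smooth_all a b (fun x => f x * g x).
Proof. intros H1 H2 n. apply Dn_mult; auto. Qed.
Lemma sa_deriv f : smooth_all a b f -> smooth_all a b (Derive f).
Proof. intros H n. apply Dn_deriv. apply H. Qed.
Lemma sa_sin f : smooth_all a b f -> smooth_all a b (fun x => sin (f x)).
Proof.
intros H n. apply (Dn_comp a b m_infty p_infty n sin f); auto.
intros m; apply Dn_sin_cos. intros s _; split; simpl; auto.
Qed.
Lemma sa_cos f : smooth_all a b f -> smooth_all a b (fun x => cos (f x)).
Proof.
intros H n. apply (Dn_comp a b m_infty p_infty n cos f); auto.
intros m; apply Dn_sin_cos. intros s _; split; simpl; auto.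
Qed.
Lemma sa_inv f : smooth_all a b f -> (forall s, inI a b s -> 0 < f s) -> smooth_all a b (fun x => / f x).
Proof.
intros H Hp n. apply (Dn_comp a b (Finite 0) p_infty n (fun z => / z) f); auto.
intros m; apply Dn_inv. intros s Hs; split; simpl; auto.
Qed.
Lemma sa_sqrt f : smooth_all a b f -> (forall s, inI a b s -> 0 < f s) -> smooth_all a b (fun x => sqrt (f x)).
Proof.
intros H Hp n. apply (Dn_comp a b (Finite 0) p_infty n sqrt f); auto.
intros m; apply Dn_sqrt. intros s Hs; split; simpl; auto.
Qed.
Lemma sa_ex_derive f s : smooth_all a b f -> inI a b s -> ex_derive f s.
Proof. intros H Hs. exact (Dn_ex_derive a b 0 f s (H 1%nat) Hs). Qed.
End SA.

Section PhiSmooth.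
Variables (a b c d : Rbar) (phi h : R -> R).
Hypothesis Hin : forall u, inI c d u -> inI a b (phi u).
Hypothesis Hder : forall u, inI c d u -> is_derive phi u (h (phi u)).
Hypothesis Hh : smooth_all a b h.

Lemma comp_phi_Dn n : forall k, smooth_all a b k -> Dn c d n (fun u => k (phi u)).
Proof.
induction n as [|n IH]; intros k Hk.
- intros j Hj s Hs. assert (j = 0%nat) by lia. subst. exact I.
- apply Dn_S. split.
  + intros u Hu. apply ex_derive_comp. apply (sa_ex_derive a b); auto.
    eexists; apply Hder; auto.
  + apply (Dn_ext c d n (fun u => (fun z => Derive k z * h z) (phi u))).
    * exact (IH (fun z => Derive k z * h z) (sa_mult a b _ _ (sa_deriv a b k Hk) Hh)).
    * intros u Hu. rewrite (Derive_comp k phi u). rewrite (is_derive_unique phi u _ (Hder u Hu)).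
      apply Rmult_comm. apply (sa_ex_derive a b); auto. eexists; apply Hder; auto.
Qed.

Lemma phi_smooth : smooth_on c d phi.
Proof.
apply smooth_on_all. intros n. apply (comp_phi_Dn n (fun z => z)). apply sa_id.
Qed.
End PhiSmooth.


Lemma inI_bigger a b s : inI a b s -> exists s', inI a b s' /\ s < s'.
Proof.
intros [H1 H2]. destruct b as [b| |]; simpl in H2; try contradiction.
- exists ((s+b)/2). split; [split|]; try (simpl; lra).
  destruct a as [a| |]; simpl in *; auto; lra.
- exists (s+1). split; [split|]; try (simpl; lra); auto.
  destruct a as [a| |]; simpl in *; auto; lra.
Qed.

Lemma inI_smaller a b s : inI a b s -> exists s', inI a b s' /\ s' < s.
Proof.
intros [H1 H2]. destruct a as [a| |]; simpl in H1; try contradiction.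
- exists ((s+a)/2). split; [split|]; try (simpl; lra).
  destruct b as [b| |]; simpl in *; auto; lra.
- exists (s-1). split; [split|]; try (simpl; lra); auto.
  destruct b as [b| |]; simpl in *; auto; lra.
Qed.

Lemma inI_exists a b : Rbar_lt a b -> exists s, inI a b s.
Proof.
intros H. destruct a as [a| |]; destruct b as [b| |]; simpl in H; try contradiction.
- exists ((a+b)/2). split; simpl; lra.
- exists (a+1). split; simpl; auto; lra.
- exists (b-1). split; simpl; auto; lra.
- exists 0. split; simpl; auto.
Qed.

Section Inv.
Variables (a b : Rbar) (sig f : R -> R).
Hypothesis Hab : Rbar_lt a b.
Hypothesis Hd : forall s, inI a b s -> is_derive sig s (f s).
Hypothesis Hf : forall s, inI a b s -> 0 < f s.

Lemma sig_cont s : inI a b s -> continuity_pt sig s.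
Proof.
intros Hs. apply continuity_pt_filterlim. apply (ex_derive_continuous sig).
eexists; apply Hd; auto.
Qed.

Lemma sig_mono s1 s2 : inI a b s1 -> inI a b s2 -> s1 < s2 -> sig s1 < sig s2.
Proof.
intros H1 H2 H12.
destruct (MVT_gen sig s1 s2 f) as [z [Hz E]].
- intros z Hz. apply Hd. apply (inI_between a b s1 s2 z H1 H2). lra.
- intros z Hz. apply sig_cont. apply (inI_between a b s1 s2 z H1 H2). auto.
- rewrite Rmin_left in Hz by lra. rewrite Rmax_right in Hz by lra.
  assert (0 < f z) by (apply Hf; apply (inI_between a b s1 s2 z H1 H2);
    rewrite Rmin_left by lra; rewrite Rmax_right by lra; auto).
  assert (0 < f z * (s2 - s1)) by (apply Rmult_lt_0_compat; lra). lra.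
Qed.

Lemma sig_inj s1 s2 : inI a b s1 -> inI a b s2 -> sig s1 = sig s2 -> s1 = s2.
Proof.
intros H1 H2 E. destruct (Rtotal_order s1 s2) as [L|[L|L]]; auto.
- pose proof (sig_mono s1 s2 H1 H2 L). lra.
- pose proof (sig_mono s2 s1 H2 H1 L). lra.
Qed.

Definition Img u := exists s, inI a b s /\ sig s = u.
Definition cI := Glb_Rbar Img.
Definition dI := Lub_Rbar Img.

Lemma sig_in s : inI a b s -> inI cI dI (sig s).
Proof.
intros Hs. split.
- destruct (inI_smaller a b s Hs) as [s' [Hs' L]].
  pose proof (sig_mono s' s Hs' Hs L).
  apply Rbar_le_lt_trans with (Finite (sig s')).
  + apply (proj1 (Glb_Rbar_correct Img)). exists s'; auto.
  + simpl; auto.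
- destruct (inI_bigger a b s Hs) as [s' [Hs' L]].
  pose proof (sig_mono s s' Hs Hs' L).
  apply Rbar_lt_le_trans with (Finite (sig s')).
  + simpl; auto.
  + apply (proj1 (Lub_Rbar_correct Img)). exists s'; auto.
Qed.

Lemma cd_lt : Rbar_lt cI dI.
Proof.
destruct (inI_exists a b Hab) as [s Hs]. destruct (sig_in s Hs) as [H1 H2].
eapply Rbar_lt_trans; eauto.
Qed.

Lemma img_above u : inI cI dI u -> exists s, inI a b s /\ u < sig s.
Proof.
intros [_ H]. destruct (classic (exists s, inI a b s /\ u < sig s)) as [K|K]; auto.
exfalso. assert (Hub : is_ub_Rbar Img u).
{ intros v [s [Hs <-]]. simpl. apply Rnot_lt_le. intro L. apply K. exists s; auto. }
pose proof (proj2 (Lub_Rbar_correct Img) u Hub). unfold dI in H.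
apply (Rbar_lt_not_le _ _ H). auto.
Qed.

Lemma img_below u : inI cI dI u -> exists s, inI a b s /\ sig s < u.
Proof.
intros [H _]. destruct (classic (exists s, inI a b s /\ sig s < u)) as [K|K]; auto.
exfalso. assert (Hlb : is_lb_Rbar Img u).
{ intros v [s [Hs <-]]. simpl. apply Rnot_lt_le. intro L. apply K. exists s; auto. }
pose proof (proj2 (Glb_Rbar_correct Img) u Hlb). unfold cI in H.
apply (Rbar_lt_not_le _ _ H). auto.
Qed.

Lemma img_full u : inI cI dI u -> exists s, inI a b s /\ sig s = u.
Proof.
intros Hu. destruct (img_above u Hu) as [s2 [H2 L2]]. destruct (img_below u Hu) as [s1 [H1 L1]].
assert (L : s1 < s2).
{ destruct (Rtotal_order s1 s2) as [L|[L|L]]; auto. subst; lra.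
  pose proof (sig_mono s2 s1 H2 H1 L). lra. }
destruct (Ranalysis5.IVT_interv (fun z => sig z - u) s1 s2) as [z [Hz E]]; auto.
- intros z Hz. apply continuity_pt_minus. apply sig_cont.
  apply (inI_between a b s1 s2 z H1 H2). rewrite Rmin_left by lra; rewrite Rmax_right by lra; auto.
  apply continuity_pt_const. intros ? ?; auto.
- lra.
- lra.
- exists z. split. apply (inI_between a b s1 s2 z H1 H2). rewrite Rmin_left by lra; rewrite Rmax_right by lra; auto.
  lra.
Qed.

Definition phi u := epsilon (inhabits 0) (fun s => inI a b s /\ sig s = u).

Lemma phi_spec u : inI cI dI u -> inI a b (phi u) /\ sig (phi u) = u.
Proof. intros Hu. unfold phi. apply epsilon_spec. apply img_full; auto. Qed.

Lemma phi_sig s : inI a b s -> phi (sig s) = s.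
Proof.
intros Hs. destruct (phi_spec (sig s) (sig_in s Hs)) as [H1 H2].
apply sig_inj; auto.
Qed.

Lemma phi_derive u : inI cI dI u -> is_derive phi u (/ f (phi u)).
Proof.
intros Hu. destruct (phi_spec u Hu) as [Hp Hsp].
destruct (inI_smaller a b (phi u) Hp) as [s1 [H1 L1]].
destruct (inI_bigger a b (phi u) Hp) as [s2 [H2 L2]].
assert (M1 : sig s1 < u) by (rewrite <- Hsp; apply sig_mono; auto).
assert (M2 : u < sig s2) by (rewrite <- Hsp; apply sig_mono; auto).
assert (Hin : forall z, s1 <= z <= s2 -> inI a b z).
{ intros z Hz. apply (inI_between a b s1 s2 z H1 H2). rewrite Rmin_left by lra; rewrite Rmax_right by lra; auto. }
assert (Hc1 := sig_in s1 H1). assert (Hc2 := sig_in s2 H2).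
assert (Hv : forall v, sig s1 <= v <= sig s2 -> inI cI dI v).
{ intros v Hv. apply (inI_between cI dI (sig s1) (sig s2) v Hc1 Hc2).
  rewrite Rmin_left by lra; rewrite Rmax_right by lra; auto. }
assert (Hphi : forall v, sig s1 <= v <= sig s2 -> s1 <= phi v <= s2).
{ intros v Hv'. destruct (phi_spec v (Hv v Hv')) as [K1 K2]. split.
  - apply Rnot_lt_le; intro L. pose proof (sig_mono (phi v) s1 K1 H1 L). lra.
  - apply Rnot_lt_le; intro L. pose proof (sig_mono s2 (phi v) H2 K1 L). lra. }
assert (Hcont : continuity_pt phi u).
{ apply (Ranalysis5.continuity_pt_recip_interv sig phi s1 s2); try lra.
  - intros z w Hz Hzw Hw. apply sig_mono; auto. apply Hin; lra. apply Hin; lra.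
  - intros v Hv1 Hv2. unfold comp, id. apply phi_spec. apply Hv; lra.
  - intros v Hv1 Hv2. apply Hphi; lra.
  - intros z Hz. apply sig_cont. apply Hin; auto. }
assert (Prf : forall z, phi (sig s1) <= z <= phi (sig s2) -> derivable_pt sig z).
{ intros z Hz. rewrite !phi_sig in Hz by auto. exists (f z). apply is_derive_Reals. apply Hd. apply Hin; auto. }
assert (Pi : phi (sig s1) <= phi u <= phi (sig s2)).
{ rewrite !phi_sig by auto. lra. }
pose proof (Ranalysis5.derivable_pt_lim_recip_interv sig phi (sig s1) (sig s2) u Prf Hcont ltac:(lra) ltac:(lra) Pi) as D.
apply is_derive_Reals.
replace (/ f (phi u)) with (1 / derive_pt sig (phi u) (Prf (phi u) Pi)).
- apply D.
  + intros v Hv'. unfold comp, id. apply phi_spec. apply Hv; auto.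
  + rewrite (derive_pt_eq_0 sig (phi u) (f (phi u)) (Prf (phi u) Pi)).
    apply Rgt_not_eq. apply Hf; auto. apply is_derive_Reals. apply Hd; auto.
- rewrite (derive_pt_eq_0 sig (phi u) (f (phi u)) (Prf (phi u) Pi)).
  field. apply Rgt_not_eq. apply Hf; auto. apply is_derive_Reals. apply Hd; auto.
Qed.

End Inv.


Lemma trig_elim (P : R -> R -> Prop) th :
  (forall q, 1 + q^2 <> 0 -> P (2*q/(1+q^2)) ((1-q^2)/(1+q^2))) -> P 0 (-1) -> P (sin th) (cos th).
Proof.
intros H1 H2. pose proof (sin2_cos2 th) as H. unfold Rsqr in H.
destruct (Req_dec (cos th) (-1)) as [E|E].
- assert (sin th = 0) by nra. rewrite H0, E. exact H2.
- destruct (param (sin th) (cos th) ltac:(lra) E) as [q [-> ->]]. apply H1.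
  intro. nra.
Qed.

Ltac elim_angle th :=
  pattern (sin th), (cos th); apply trig_elim; [intros ?q ?Hq; cbv beta | cbv beta].

Definition Eh l (x y : R -> R) u := Derive x u ^ 2 + cos (x u) ^ 2 * (1 - l * cos (x u) ^ 2) * Derive y u ^ 2.
Definition Fh l (x y : R -> R) u := - l * cos (x u) ^ 2 * sin (x u) ^ 2 * Derive y u.
Definition Gh l (x : R -> R) u := sin (x u) ^ 2 - l * sin (x u) ^ 4.

Lemma Ds_Phi (x y : R -> R) (u t : R) : ex_derive x u -> ex_derive y u ->
  Ds (Phi x y) u t =
  (- sin (y u) * Derive y u * cos (x u) - cos (y u) * sin (x u) * Derive x u,
   cos (y u) * Derive y u * cos (x u) - sin (y u) * sin (x u) * Derive x u,
   cos t * cos (x u) * Derive x u, sin t * cos (x u) * Derive x u).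
Proof.
intros Hx Hy. unfold Ds. unfold Defs.c1, Defs.c2, Defs.c3, Defs.c4, Phi. cbv beta iota.
f_equal; [f_equal; [f_equal|] |]; apply is_derive_unique; auto_derive; auto; try change (fun x0 : R => y x0) with y; try change (fun x0 : R => x x0) with x; ring.
Qed.

Lemma Dt_Phi (x y : R -> R) (u t : R) :
  Dt (Phi x y) u t = (0, 0, - sin t * sin (x u), cos t * sin (x u)).
Proof.
unfold Dt. unfold Defs.c1, Defs.c2, Defs.c3, Defs.c4, Phi. cbv beta iota.
f_equal; [f_equal; [f_equal|] |]; apply is_derive_unique; auto_derive; auto; try change (fun x0 : R => y x0) with y; try change (fun x0 : R => x x0) with x; ring.
Qed.

Lemma fundE_eq (tau : R) (x y : R -> R) (u t : R) : ex_derive x u -> ex_derive y u ->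
  fundE tau (Phi x y) u t = Eh (lam tau) x y u.
Proof.
intros Hx Hy. unfold fundE. rewrite Ds_Phi by auto. unfold berger_metric, dot4, Vfield, Phi, Eh, lam.
elim_angle (y u); elim_angle t; elim_angle (x u); field; auto.
Qed.

Lemma fundF_eq (tau : R) (x y : R -> R) (u t : R) : ex_derive x u -> ex_derive y u ->
  fundF tau (Phi x y) u t = Fh (lam tau) x y u.
Proof.
intros Hx Hy. unfold fundF. rewrite Ds_Phi by auto. rewrite Dt_Phi. unfold berger_metric, dot4, Vfield, Phi, Fh, lam.
elim_angle (y u); elim_angle t; elim_angle (x u); field; auto.
Qed.

Lemma fundG_eq (tau : R) (x y : R -> R) (u t : R) :
  fundG tau (Phi x y) u t = Gh (lam tau) x u.
Proof.
unfold fundG. rewrite Dt_Phi. unfold berger_metric, dot4, Vfield, Phi, Gh, lam.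
elim_angle (y u); elim_angle t; elim_angle (x u); field; auto.
Qed.


Definition E1f l s c x1 x2 y1 y2 := 2*x1*x2-2*c*s*x1*(1-l*c^2)*y1^2+2*l*c^3*s*x1*y1^2+2*c^2*(1-l*c^2)*y1*y2.
Definition F1f l s c x1 y1 y2 := -l*(-2*c*s^3*x1*y1+2*c^3*s*x1*y1+c^2*s^2*y2).
Definition G1f l s c x1 := 2*s*c*x1-4*l*s^3*c*x1.
Definition G2f l s c x1 x2 := (2*(c^2-s^2)-4*l*(3*s^2*c^2-s^4))*x1^2+(2*s*c-4*l*s^3*c)*x2.
Definition Ef l c x1 y1 := x1^2+c^2*(1-l*c^2)*y1^2.
Definition Ff l s c y1 := -l*c^2*s^2*y1.
Definition Gf l s := s^2-l*s^4.

Definition Kf l s c x1 x2 y1 y2 :=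
  let E := Ef l c x1 y1 in let F := Ff l s c y1 in let G := Gf l s in
  let E1 := E1f l s c x1 x2 y1 y2 in let F1 := F1f l s c x1 y1 y2 in
  let G1 := G1f l s c x1 in let G2 := G2f l s c x1 x2 in
  (det3 (-G2/2) (E1/2) F1 (-G1/2) E F 0 F G - det3 0 0 (G1/2) 0 E F (G1/2) F G)/(E*G-F^2)^2.

Definition Qf l s c x1 y1 := x1^2+(1-l)*c^2*y1^2/(1-l*s^2).
Definition Q1f l s c x1 x2 y1 y2 :=
  2*x1*x2+(1-l)*((-2*c*s*x1*y1^2+2*c^2*y1*y2)*(1-l*s^2)-c^2*y1^2*(-l*2*s*c*x1))/(1-l*s^2)^2.

Lemma key (s c x1 x2 y1 y2 l : R) :
  s^2 + c^2 = 1 -> c <> -1 ->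
  c <> 0 -> 1 - l*s^2 <> 0 -> 1 - 2*l*s^2 <> 0 -> x1^2*(1-l*s^2)+(1-l)*c^2*y1^2 <> 0 ->
  Ef l c x1 y1 * Gf l s - Ff l s c y1 ^2 <> 0 ->
  let Q := Qf l s c x1 y1 in let Q1 := Q1f l s c x1 x2 y1 y2 in
  (x2*Q-x1*Q1/2)/Q^2 = -(s/c)*((1-l*s^2)/(1-2*l*s^2)*Kf l s c x1 x2 y1 y2
     -(x1^2/Q)*((1-l)/(1-l*s^2)+4*l*c^2/(1-2*l*s^2))).
Proof.
intros Hsc Hc1 Hc H1 H2 HQ HEG Q Q1.
unfold Q, Q1, Qf, Q1f, Kf, det3. unfold E1f, Ef, F1f, Ff, G2f, G1f, Gf in *.
field_simplify_eq. 2: repeat split; auto.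
destruct (param s c Hsc Hc1) as [q [-> ->]].
assert (1 + q^2 <> 0) by (intro; nra).
field. auto.
Qed.

Lemma EG_eq (s c x1 y1 l : R) : s^2 + c^2 = 1 ->
  Ef l c x1 y1 * Gf l s - Ff l s c y1 ^ 2 = s^2 * (x1^2*(1-l*s^2)+(1-l)*c^2*y1^2).
Proof.
intros Hsc. unfold Ef, Gf, Ff.
destruct (Req_dec c (-1)) as [Hm|Hm].
- assert (s = 0) by nra. subst. ring.
- destruct (param s c Hsc Hm) as [q [-> ->]].
  assert (1 + q^2 <> 0) by (intro; nra).
  field. auto.
Qed.


Section C.
Variables (tau : R) (a b : Rbar) (x y : R -> R).
Hypothesis HI : forall u, inI a b u ->
  ex_derive x u /\ ex_derive y u /\ ex_derive (Derive x) u /\ ex_derive (Derive y) u.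
Let l := lam tau.
Let E := fundE tau (Phi x y).
Let F := fundF tau (Phi x y).
Let G := fundG tau (Phi x y).

Lemma locI s : inI a b s -> forall P : R -> Prop, (forall u, inI a b u -> P u) -> locally s P.
Proof. intros Hs P HP. apply (filter_imp (inI a b)); auto. apply inI_locally; auto. Qed.

Lemma pds_E s t : inI a b s -> pds E s t =
  E1f l (sin (x s)) (cos (x s)) (Derive x s) (Derive (Derive x) s) (Derive y s) (Derive (Derive y) s).
Proof.
intros Hs. destruct (HI s Hs) as (h1 & h2 & h3 & h4).
unfold pds. rewrite (Derive_ext_loc _ (Eh l x y)).
2:{ apply (locI s Hs). intros u Hu. destruct (HI u Hu) as (k1 & k2 & _). apply fundE_eq; auto. }
apply is_derive_unique. unfold Eh. auto_derive. repeat split; auto.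
try change (fun x0 : R => y x0) with y; try change (fun x0 : R => x x0) with x.
try change (fun x0 : R => Derive y x0) with (Derive y); try change (fun x0 : R => Derive x x0) with (Derive x).
unfold E1f. ring.
Qed.

Lemma pds_F s t : inI a b s -> pds F s t =
  F1f l (sin (x s)) (cos (x s)) (Derive x s) (Derive y s) (Derive (Derive y) s).
Proof.
intros Hs. destruct (HI s Hs) as (h1 & h2 & h3 & h4).
unfold pds. rewrite (Derive_ext_loc _ (Fh l x y)).
2:{ apply (locI s Hs). intros u Hu. destruct (HI u Hu) as (k1 & k2 & _). apply fundF_eq; auto. }
apply is_derive_unique. unfold Fh. auto_derive. repeat split; auto.
try change (fun x0 : R => y x0) with y; try change (fun x0 : R => x x0) with x.
try change (fun x0 : R => Derive y x0) with (Derive y); try change (fun x0 : R => Derive x x0) with (Derive x).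
unfold F1f. ring.
Qed.

Lemma pds_G_gen u t : inI a b u -> pds G u t = G1f l (sin (x u)) (cos (x u)) (Derive x u).
Proof.
intros Hs. destruct (HI u Hs) as (h1 & h2 & h3 & h4).
unfold pds. rewrite (Derive_ext _ (Gh l x)).
2:{ intros v. apply fundG_eq. }
apply is_derive_unique. unfold Gh. auto_derive. repeat split; auto.
try change (fun x0 : R => x x0) with x.
unfold G1f. ring.
Qed.

Lemma pds_pds_G s t : inI a b s -> pds (pds G) s t =
  G2f l (sin (x s)) (cos (x s)) (Derive x s) (Derive (Derive x) s).
Proof.
intros Hs. destruct (HI s Hs) as (h1 & h2 & h3 & h4).
unfold pds at 1. rewrite (Derive_ext_loc _ (fun u => G1f l (sin (x u)) (cos (x u)) (Derive x u))).
2:{ apply (locI s Hs). intros u Hu. apply pds_G_gen; auto. }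
apply is_derive_unique. unfold G1f. auto_derive. repeat split; auto.
try change (fun x0 : R => x x0) with x.
try change (fun x0 : R => Derive x x0) with (Derive x).
unfold G2f. ring.
Qed.

Lemma pdt_E_gen u t : inI a b u -> pdt E u t = 0.
Proof.
intros Hs. destruct (HI u Hs) as (h1 & h2 & h3 & h4).
unfold pdt. rewrite (Derive_ext _ (fun _ => Eh l x y u)). apply Derive_const.
intros v. apply fundE_eq; auto.
Qed.

Lemma pdt_F_gen u t : inI a b u -> pdt F u t = 0.
Proof.
intros Hs. destruct (HI u Hs) as (h1 & h2 & h3 & h4).
unfold pdt. rewrite (Derive_ext _ (fun _ => Fh l x y u)). apply Derive_const.
intros v. apply fundF_eq; auto.
Qed.

Lemma pdt_G_gen u t : pdt G u t = 0.
Proof.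
unfold pdt. rewrite (Derive_ext _ (fun _ => Gh l x u)). apply Derive_const.
intros v. apply fundG_eq; auto.
Qed.

Lemma pdt_pdt_E s t : inI a b s -> pdt (pdt E) s t = 0.
Proof.
intros Hs. unfold pdt at 1. rewrite (Derive_ext _ (fun _ => 0)). apply Derive_const.
intros v. apply pdt_E_gen; auto.
Qed.

Lemma pds_pdt_F s t : inI a b s -> pds (pdt F) s t = 0.
Proof.
intros Hs. unfold pds. rewrite (Derive_ext_loc _ (fun _ => 0)). apply Derive_const.
apply (locI s Hs). intros u Hu. apply pdt_F_gen; auto.
Qed.

Lemma curv_eq s t : inI a b s ->
  gauss_curvature tau (Phi x y) s t =
  Kf l (sin (x s)) (cos (x s)) (Derive x s) (Derive (Derive x) s) (Derive y s) (Derive (Derive y) s).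
Proof.
intros Hs. destruct (HI s Hs) as (h1 & h2 & h3 & h4).
unfold gauss_curvature. cbv zeta.
fold E F G.
rewrite (pds_E s t Hs), (pds_F s t Hs), (pds_G_gen s t Hs), (pds_pds_G s t Hs),
  (pdt_E_gen s t Hs), (pdt_F_gen s t Hs), (pdt_G_gen s t), (pdt_pdt_E s t Hs), (pds_pdt_F s t Hs).
unfold E, F, G. rewrite fundE_eq, fundF_eq, fundG_eq by auto.
unfold Kf, Eh, Fh, Gh, Ef, Ff, Gf. cbv zeta. fold l.
match goal with |- ?A / ?D = ?B / ?D => let H := fresh in assert (H : A = B) by (unfold det3; field); rewrite H; reflexivity end.
Qed.
End C.


Section P1.
Variables (tau : R) (a b : Rbar) (x y K : R -> R).
Hypothesis Htau : 0 < tau.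
Hypothesis Hab : Rbar_lt a b.
Hypothesis Hx : smooth_on a b x.
Hypothesis Hy : smooth_on a b y.
Hypothesis Hc : forall s, inI a b s ->
        0 < sin (x s) /\ cos (x s) <> 0 /\
        1 - 2 * lam tau * sin (x s) ^ 2 <> 0 /\ Derive y s <> 0.
Hypothesis HK : forall s t, inI a b s -> K s = gauss_curvature tau (Phi x y) s t.

Lemma Sx : smooth_all a b x. Proof. apply smooth_on_all; auto. Qed.
Lemma Sy : smooth_all a b y. Proof. apply smooth_on_all; auto. Qed.
Lemma Sx1 : smooth_all a b (Derive x). Proof. apply sa_deriv, Sx. Qed.
Lemma Sy1 : smooth_all a b (Derive y). Proof. apply sa_deriv, Sy. Qed.

Lemma HI u : inI a b u ->
  ex_derive x u /\ ex_derive y u /\ ex_derive (Derive x) u /\ ex_derive (Derive y) u.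
Proof.
intros Hu. repeat split; apply (sa_ex_derive a b); auto using Sx, Sy, Sx1, Sy1.
Qed.

Lemma lS_pos s : inI a b s -> 0 < 1 - lam tau * sin (x s) ^ 2.
Proof. intros Hs. apply one_m_lS_pos; auto. apply Hc; auto. Qed.

Lemma one_m_lam : 1 - lam tau = tau ^ 2.
Proof. unfold lam. ring. Qed.

Definition Qfun s := Qf (lam tau) (sin (x s)) (cos (x s)) (Derive x s) (Derive y s).

Lemma Qextra_pos s : inI a b s ->
  0 < (1 - lam tau) * cos (x s) ^ 2 * Derive y s ^ 2 / (1 - lam tau * sin (x s) ^ 2).
Proof.
intros Hs. destruct (Hc s Hs) as (h1 & h2 & h3 & h4).
apply Rdiv_lt_0_compat; [|apply lS_pos; auto].
rewrite one_m_lam. apply Rmult_lt_0_compat; [apply Rmult_lt_0_compat|]; apply pow2_gt_0; lra.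
Qed.

Lemma Qpos s : inI a b s -> 0 < Qfun s.
Proof.
intros Hs. unfold Qfun, Qf. pose proof (Qextra_pos s Hs).
assert (0 <= Derive x s ^ 2) by (apply pow2_ge_0). lra.
Qed.

Lemma SQ : smooth_all a b Qfun.
Proof.
apply (sa_ext a b (fun s => Derive x s * Derive x s + (1 - lam tau) * (cos (x s) * cos (x s) * (Derive y s * Derive y s))
   * / (1 - lam tau * (sin (x s) * sin (x s))))).
- apply sa_plus. apply sa_mult; apply Sx1.
  apply sa_mult. apply sa_mult. apply sa_const. apply sa_mult. apply sa_mult; apply sa_cos, Sx.
  apply sa_mult; apply Sy1.
  apply sa_inv. apply sa_minus. apply sa_const. apply sa_mult. apply sa_const.
  apply sa_mult; apply sa_sin, Sx.
  intros s Hs. pose proof (lS_pos s Hs). simpl in *. lra.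
- intros s Hs. pose proof (lS_pos s Hs). unfold Qfun, Qf. field. lra.
Qed.

Definition ffun s := sqrt (Qfun s).
Definition hfun s := / ffun s.

Lemma fpos s : inI a b s -> 0 < ffun s.
Proof. intros Hs. apply sqrt_lt_R0. apply Qpos; auto. Qed.

Lemma Sf : smooth_all a b ffun.
Proof. apply sa_sqrt. apply SQ. apply Qpos. Qed.

Lemma Sh : smooth_all a b hfun.
Proof. apply sa_inv. apply Sf. apply fpos. Qed.

Lemma s0_ex : { s0 | inI a b s0 }.
Proof.
apply constructive_indefinite_description. apply inI_exists; auto.
Qed.

Definition s0 := proj1_sig s0_ex.
Definition sigf s := RInt ffun s0 s.

Lemma f_cont s : inI a b s -> continuous ffun s.
Proof. intros Hs. apply (ex_derive_continuous ffun). apply (sa_ex_derive a b); auto. apply Sf. Qed.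

Lemma sig_der s : inI a b s -> is_derive sigf s (ffun s).
Proof.
intros Hs. unfold sigf. apply (is_derive_RInt ffun (RInt ffun s0) s0 s).
- apply (filter_imp (inI a b)). 2: apply inI_locally; auto.
  intros z Hz. apply (RInt_correct (V:=R_CompleteNormedModule)). apply (ex_RInt_continuous (V:=R_CompleteNormedModule)). intros w Hw.
  apply f_cont. apply (inI_between a b s0 z w); auto. apply (proj2_sig s0_ex).
- apply f_cont; auto.
Qed.


Definition cc := cI a b sigf.
Definition dd := dI a b sigf.
Definition ph := phi a b sigf.

Lemma ph_in u : inI cc dd u -> inI a b (ph u).
Proof. intros Hu. apply (phi_spec a b sigf ffun); auto using sig_der, fpos. Qed.

Lemma ph_der u : inI cc dd u -> is_derive ph u (hfun (ph u)).
Proof. intros Hu. apply (phi_derive a b sigf ffun); auto using sig_der, fpos. Qed.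

Lemma ph_smooth : smooth_on cc dd ph.
Proof. exact (phi_smooth a b cc dd ph hfun ph_in ph_der Sh). Qed.

Lemma cd_ok : Rbar_lt cc dd.
Proof. apply (cd_lt a b sigf ffun); auto using sig_der, fpos. Qed.

Lemma ph_surj s : inI a b s -> exists u, inI cc dd u /\ ph u = s.
Proof.
intros Hs. exists (sigf s). split. apply (sig_in a b sigf ffun); auto using sig_der, fpos.
apply (phi_sig a b sigf ffun); auto using sig_der, fpos.
Qed.

Definition w u := Derive x (ph u) * hfun (ph u).
Definition sg u := cos (x (ph u)) * Derive y (ph u).
Definition rr z := sqrt (1 - lam tau * sin (x z) ^ 2).

Lemma ff_sq z : inI a b z -> ffun z ^ 2 = Qfun z.
Proof. intros Hz. unfold ffun. rewrite <- Rsqr_pow2. apply Rsqr_sqrt. left; apply Qpos; auto. Qed.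

Lemma rr_sq z : inI a b z -> rr z ^ 2 = 1 - lam tau * sin (x z) ^ 2.
Proof. intros Hz. unfold rr. rewrite <- Rsqr_pow2. apply Rsqr_sqrt. left; apply lS_pos; auto. Qed.

Lemma rr_pos z : inI a b z -> 0 < rr z.
Proof. intros Hz. apply sqrt_lt_R0. apply lS_pos; auto. Qed.

Lemma Q_minus z : inI a b z -> Qfun z - Derive x z ^ 2 =
  tau ^ 2 * (cos (x z) * Derive y z) ^ 2 / (1 - lam tau * sin (x z) ^ 2).
Proof. intros Hz. pose proof (lS_pos z Hz). unfold Qfun, Qf. rewrite <- one_m_lam. field. lra. Qed.

Lemma w_sq u : inI cc dd u -> 1 - w u ^ 2 =
  (tau * Rabs (sg u) / (rr (ph u) * ffun (ph u))) ^ 2.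
Proof.
intros Hu. pose proof (ph_in u Hu) as Hp.
pose proof (fpos _ Hp). pose proof (rr_pos _ Hp).
pose proof (Q_minus _ Hp) as HQm. pose proof (Qpos _ Hp). pose proof (lS_pos _ Hp).
pose proof (ff_sq _ Hp) as Hf2. pose proof (rr_sq _ Hp) as Hr2.
unfold w, hfun. fold (sg u) in HQm.
replace ((tau * Rabs (sg u) / (rr (ph u) * ffun (ph u))) ^ 2) with
  (tau^2 * Rabs (sg u)^2 / (rr (ph u)^2 * ffun (ph u)^2)) by (field; split; lra).
replace ((Derive x (ph u) * / ffun (ph u)) ^ 2) with (Derive x (ph u) ^ 2 / ffun (ph u) ^ 2) by (field; lra).
rewrite pow2_abs, Hf2, Hr2.
replace (Derive x (ph u) ^ 2) with (Qfun (ph u) - tau ^ 2 * sg u ^ 2 / (1 - lam tau * sin (x (ph u)) ^ 2)) by lra.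
field. split; lra.
Qed.


Lemma sg_nz u : inI cc dd u -> sg u <> 0.
Proof.
intros Hu. pose proof (ph_in u Hu) as Hp. destruct (Hc _ Hp) as (h1 & h2 & h3 & h4).
unfold sg. apply Rmult_integral_contrapositive; auto.
Qed.

Lemma A_pos u : inI cc dd u -> 0 < tau * Rabs (sg u) / (rr (ph u) * ffun (ph u)).
Proof.
intros Hu. pose proof (ph_in u Hu) as Hp. pose proof (fpos _ Hp). pose proof (rr_pos _ Hp).
apply Rdiv_lt_0_compat. apply Rmult_lt_0_compat; auto. apply Rabs_pos_lt. apply sg_nz; auto.
apply Rmult_lt_0_compat; auto.
Qed.

Lemma w_bnd u : inI cc dd u -> -1 < w u < 1.
Proof.
intros Hu. pose proof (w_sq u Hu). pose proof (A_pos u Hu).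
assert (0 < (tau * Rabs (sg u) / (rr (ph u) * ffun (ph u))) ^ 2) by (apply pow2_gt_0; lra).
nra.
Qed.

Definition al u := if Rlt_dec 0 (sg u) then acos (w u) else - acos (w u).

Lemma cos_al u : inI cc dd u -> cos (al u) = w u.
Proof.
intros Hu. pose proof (w_bnd u Hu). unfold al. destruct (Rlt_dec 0 (sg u)).
- apply cos_acos; lra.
- rewrite cos_neg. apply cos_acos; lra.
Qed.

Lemma sqrt_w u : inI cc dd u -> sqrt (1 - (w u)²) = tau * Rabs (sg u) / (rr (ph u) * ffun (ph u)).
Proof.
intros Hu. rewrite Rsqr_pow2. rewrite w_sq by auto. apply sqrt_pow2. left; apply A_pos; auto.
Qed.

Lemma sin_al u : inI cc dd u -> sin (al u) = tau * sg u / (rr (ph u) * ffun (ph u)).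
Proof.
intros Hu. pose proof (w_bnd u Hu). pose proof (sg_nz u Hu). unfold al. destruct (Rlt_dec 0 (sg u)).
- rewrite sin_acos by lra. rewrite sqrt_w by auto. rewrite Rabs_pos_eq by lra. reflexivity.
- rewrite sin_neg. rewrite sin_acos by lra. rewrite sqrt_w by auto. rewrite Rabs_left by lra.
  unfold Rdiv. ring.
Qed.

Lemma sin_al_nz u : inI cc dd u -> sin (al u) <> 0.
Proof.
intros Hu. rewrite sin_al by auto. pose proof (ph_in u Hu) as Hp. pose proof (fpos _ Hp). pose proof (rr_pos _ Hp).
pose proof (sg_nz u Hu). unfold Rdiv. apply Rmult_integral_contrapositive. split.
apply Rmult_integral_contrapositive. split; lra.
apply Rinv_neq_0_compat. apply Rmult_integral_contrapositive; split; lra.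
Qed.


Definition Q1 z := Q1f (lam tau) (sin (x z)) (cos (x z)) (Derive x z) (Derive (Derive x) z) (Derive y z) (Derive (Derive y) z).

Lemma DQ z : inI a b z -> is_derive Qfun z (Q1 z).
Proof.
intros Hz. destruct (HI z Hz) as (h1 & h2 & h3 & h4).
pose proof (lS_pos z Hz).
unfold Qfun, Qf, Q1, Q1f.
auto_derive.
{ repeat split; auto. intro E. ring_simplify in E. nra. }
try change (fun x0 : R => y x0) with y; try change (fun x0 : R => x x0) with x.
try change (fun x0 : R => Derive y x0) with (Derive y); try change (fun x0 : R => Derive x x0) with (Derive x).
field. lra.
Qed.

Lemma Dk z : inI a b z -> is_derive (fun z => Derive x z * hfun z) z
  (Derive (Derive x) z / ffun z - Derive x z * Q1 z / (2 * ffun z ^ 3)).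
Proof.
intros Hz. destruct (HI z Hz) as (h1 & h2 & h3 & h4).
pose proof (Qpos z Hz) as HQ. pose proof (fpos z Hz) as Hf.
assert (HQd : ex_derive Qfun z) by (eexists; apply DQ; auto).
unfold hfun, ffun in *.
auto_derive.
{ repeat split; auto; lra. }
try change (fun x0 : R => Derive x x0) with (Derive x).
try change (fun x0 : R => Qfun x0) with Qfun.
rewrite (is_derive_unique Qfun z (Q1 z) (DQ z Hz)).
field. lra.
Qed.


Definition Dwv u := hfun (ph u) * (Derive (Derive x) (ph u) / ffun (ph u) - Derive x (ph u) * Q1 (ph u) / (2 * ffun (ph u) ^ 3)).

Lemma Dw u : inI cc dd u -> is_derive w u (Dwv u).
Proof.
intros Hu. pose proof (ph_in u Hu) as Hp.
pose proof (is_derive_comp (fun z => Derive x z * hfun z) ph u _ _ (Dk _ Hp) (ph_der u Hu)) as D.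
exact D.
Qed.

Lemma acos_der z : -1 < z < 1 -> is_derive acos z (-1 / sqrt (1 - z²)).
Proof.
intros Hz. apply is_derive_Reals. apply (derive_pt_eq_1 acos z _ (derivable_pt_acos z Hz)).
apply derive_pt_acos.
Qed.

Lemma sg_loc u : inI cc dd u -> 
  (0 < sg u -> locally u (fun v => 0 < sg v)) /\ (sg u < 0 -> locally u (fun v => sg v < 0)).
Proof.
intros Hu. pose proof (ph_in u Hu) as Hp. destruct (HI _ Hp) as (h1 & h2 & h3 & h4).
assert (Hcont : continuous (fun v => (fun z => cos (x z) * Derive y z) (ph v)) u).
{ apply (@continuous_comp R_UniformSpace R_UniformSpace R_UniformSpace ph (fun z => cos (x z) * Derive y z) u).
  - exact (ex_derive_continuous (K:=R_AbsRing) (V:=R_NormedModule) ph u ltac:(eexists; apply ph_der; auto)).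
  - apply (ex_derive_continuous (K:=R_AbsRing) (V:=R_NormedModule) (fun z => cos (x z) * Derive y z)).
    apply ex_derive_mult; auto. apply ex_derive_comp; auto. eexists; apply is_derive_Reals, derivable_pt_lim_cos. }
split; intros H.
- exact (Hcont (fun z => 0 < z) (open_gt 0 _ H)).
- exact (Hcont (fun z => z < 0) (open_lt 0 _ H)).
Qed.

Lemma Dal u : inI cc dd u -> is_derive al u (- Dwv u / sin (al u)).
Proof.
intros Hu. pose proof (w_bnd u Hu) as Hb. pose proof (sg_nz u Hu) as Hn.
pose proof (sin_al_nz u Hu) as Hs.
destruct (sg_loc u Hu) as [L1 L2].
pose proof (is_derive_comp acos w u _ _ (acos_der (w u) Hb) (Dw u Hu)) as D.
unfold al in *. destruct (Rlt_dec 0 (sg u)) as [P|P].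
- apply (is_derive_ext_loc (fun v => acos (w v))).
  { apply (filter_imp (fun v => 0 < sg v)); [|apply L1; auto].
    intros v Hv. destruct (Rlt_dec 0 (sg v)); auto; lra. }
  rewrite sin_acos in * by lra.
  replace (- Dwv u / sqrt (1 - (w u)²)) with (scal (Dwv u) (-1 / sqrt (1 - (w u)²))); auto.
  unfold scal; simpl; unfold mult; simpl. field. auto.
- apply (is_derive_ext_loc (fun v => - acos (w v))).
  { apply (filter_imp (fun v => sg v < 0)); [|apply L2; lra].
    intros v Hv. destruct (Rlt_dec 0 (sg v)); auto; lra. }
  rewrite sin_neg in *. rewrite sin_acos in * by lra.
  replace (- Dwv u / - sqrt (1 - (w u)²)) with (- (Dwv u * (-1 / sqrt (1 - (w u)²)))).
  apply is_derive_Reals. apply (derivable_pt_lim_opp (fun v => acos (w v))).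
  apply is_derive_Reals. exact D.
  field. intro E. apply Hs. rewrite E. ring.
Qed.


Lemma rot_ok u : inI cc dd u -> ex_derive al u /\
  rot_system tau (fun v => x (ph v)) (fun v => y (ph v)) al (K (ph u)) u.
Proof.
intros Hu. pose proof (ph_in u Hu) as Hp. destruct (HI _ Hp) as (h1 & h2 & h3 & h4).
destruct (Hc _ Hp) as (k1 & k2 & k3 & k4).
pose proof (fpos _ Hp) as Hf. pose proof (rr_pos _ Hp) as Hr. pose proof (lS_pos _ Hp) as HlS.
pose proof (Qpos _ Hp) as HQ. pose proof (ff_sq _ Hp) as Hf2.
pose proof (sin_al_nz u Hu) as Hsa.
assert (Hphd : ex_derive ph u) by (eexists; apply ph_der; auto).
assert (Dph : Derive ph u = hfun (ph u)) by (apply is_derive_unique, ph_der; auto).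
split. { eexists; apply Dal; auto. }
unfold rot_system. cbv zeta beta.
split; [|split].
- rewrite (Derive_comp x ph u) by auto. rewrite Dph, cos_al by auto. unfold w. ring.
- rewrite (Derive_comp y ph u) by auto. rewrite Dph, sin_al by auto.
  fold (rr (ph u)). unfold sg, hfun. field. repeat split; lra.
- rewrite (is_derive_unique al u _ (Dal u Hu)).
  rewrite (HK (ph u) 0 Hp). rewrite (curv_eq tau a b x y HI (ph u) 0 Hp).
  rewrite cos_al by auto.
  pose proof (sin2_cos2 (x (ph u))) as Hsc. unfold Rsqr in Hsc.
  assert (Hsc' : sin (x (ph u)) ^ 2 + cos (x (ph u)) ^ 2 = 1) by lra.
  assert (Hcm : cos (x (ph u)) <> -1) by (intro E; rewrite E in Hsc'; nra).
  assert (HX : 0 < Derive x (ph u) ^ 2 * (1 - lam tau * sin (x (ph u)) ^ 2)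
        + (1 - lam tau) * cos (x (ph u)) ^ 2 * Derive y (ph u) ^ 2).
  { pose proof (Qextra_pos _ Hp). 
    assert (0 < (1 - lam tau) * cos (x (ph u)) ^ 2 * Derive y (ph u) ^ 2).
    { rewrite one_m_lam. apply Rmult_lt_0_compat; [apply Rmult_lt_0_compat|]; apply pow2_gt_0; lra. }
    assert (0 <= Derive x (ph u) ^ 2 * (1 - lam tau * sin (x (ph u)) ^ 2)).
    { apply Rmult_le_pos. apply pow2_ge_0. lra. }
    lra. }
  assert (HEG : Ef (lam tau) (cos (x (ph u))) (Derive x (ph u)) (Derive y (ph u)) * Gf (lam tau) (sin (x (ph u)))
     - Ff (lam tau) (sin (x (ph u))) (cos (x (ph u))) (Derive y (ph u)) ^ 2 <> 0).
  { rewrite EG_eq by auto. apply Rgt_not_eq. apply Rmult_lt_0_compat; auto. apply pow2_gt_0; lra. }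
  pose proof (key (sin (x (ph u))) (cos (x (ph u))) (Derive x (ph u)) (Derive (Derive x) (ph u))
     (Derive y (ph u)) (Derive (Derive y) (ph u)) (lam tau) Hsc' Hcm k2 ltac:(lra) k3 ltac:(lra) HEG) as Hkey.
  cbv zeta in Hkey. fold (Qfun (ph u)) in Hkey. fold (Q1 (ph u)) in Hkey.
  set (Kv := Kf (lam tau) (sin (x (ph u))) (cos (x (ph u))) (Derive x (ph u)) (Derive (Derive x) (ph u))
     (Derive y (ph u)) (Derive (Derive y) (ph u))) in *.
  assert (HDw : Dwv u = (Derive (Derive x) (ph u) * Qfun (ph u) - Derive x (ph u) * Q1 (ph u) / 2) / Qfun (ph u) ^ 2).
  { unfold Dwv, hfun. rewrite <- Hf2. field. lra. }
  assert (Hw2 : w u ^ 2 = Derive x (ph u) ^ 2 / Qfun (ph u)).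
  { unfold w, hfun. rewrite <- Hf2. field. lra. }
  rewrite Hw2, HDw, Hkey. unfold tan. field. repeat split; auto; lra.
Qed.


Lemma part1_sec : exists (c d : Rbar) (phi alpha : R -> R),
       Rbar_lt c d /\ smooth_on c d phi /\
       (forall u, inI c d u -> inI a b (phi u) /\ Derive phi u <> 0) /\
       (forall s, inI a b s -> exists u, inI c d u /\ phi u = s) /\
       (forall u, inI c d u ->
          ex_derive alpha u /\
          rot_system tau (fun v => x (phi v)) (fun v => y (phi v)) alpha
                     (K (phi u)) u).
Proof.
exists cc, dd, ph, al. split; [exact cd_ok|]. split; [exact ph_smooth|]. split.
{ intros u Hu; split; [apply ph_in; auto|].
  rewrite (is_derive_unique _ _ _ (ph_der u Hu)). unfold hfun.
  apply Rinv_neq_0_compat. apply Rgt_not_eq, fpos, ph_in; auto. }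
split. exact ph_surj. exact rot_ok.
Qed.

End P1.


Theorem lemma3p1 (tau : R) (Htau : 0 < tau) :
  (* Part 1: existence of the arc-length-type reparametrization and alpha *)
  (forall (a b : Rbar) (x y K : R -> R),
     Rbar_lt a b ->
     smooth_on a b x -> smooth_on a b y ->
     (forall s, inI a b s ->
        0 < sin (x s) /\ cos (x s) <> 0 /\
        1 - 2 * lam tau * sin (x s) ^ 2 <> 0 /\ Derive y s <> 0) ->
     (forall s t, inI a b s -> K s = gauss_curvature tau (Phi x y) s t) ->
     exists (c d : Rbar) (phi alpha : R -> R),
       Rbar_lt c d /\ smooth_on c d phi /\
       (forall u, inI c d u -> inI a b (phi u) /\ Derive phi u <> 0) /\
       (forall s, inI a b s -> exists u, inI c d u /\ phi u = s) /\
       (forall u, inI c d u ->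
          ex_derive alpha u /\
          rot_system tau (fun v => x (phi v)) (fun v => y (phi v)) alpha
                     (K (phi u)) u))
  /\
  (* Part 2: conservation of \mathcal{E} for constant K *)
  (forall (K : R) (c d : Rbar) (x y alpha : R -> R),
     Rbar_lt c d ->
     (forall u, inI c d u ->
        ex_derive x u /\ ex_derive y u /\ ex_derive alpha u /\
        cos (x u) <> 0 /\ sin (alpha u) <> 0 /\
        1 - 2 * lam tau * sin (x u) ^ 2 <> 0 /\
        rot_system tau x y alpha K u) ->
     forall u v, inI c d u -> inI c d v ->
       energy tau K x alpha u = energy tau K x alpha v).
Proof.
split.
- intros a b x y K Hab Hx Hy Hc HK. exact (part1_sec tau a b x y K Htau Hab Hx Hy Hc HK).
- apply part2; auto.
Qed.
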